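(* Let $X$ be a Tychonoff space such that $C_k(X)$ is locally complete. If $X$ has an increasing sequence of functionally bounded subsets which swallows the compact subsets of $X$, then the strong dual of $C_k(X)$ has a $\mathfrak{G}$-base.
   Context: $C_k(X)$ is the space of continuous real-valued functions on $X$ with the compact-open topology. A subset $A\subseteq X$ is functionally bounded if every continuous real-valued function on $X$ is bounded on $A$. A sequence of sets swallows the compact sets if every compact subset of $X$ is contained in some member. A locally convex space is locally complete if every closed bounded absolutely convex subset $B$ is a Banach disc (its span normed by its Minkowski functional is a Banach space). Order $\mathbb{N}^{\mathbb{N}}$ pointwise; a $\mathfrak{G}$-base is a base of neighbourhoods of zero $\{U_\alpha:\alpha\in\mathbb{N}^{\mathbb{N}}\}$ with $U_\alpha\subseteq U_\beta$ whenever $\beta\le\alpha$. The strong dual carries the topology of uniform convergence on bounded sets. *)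

(* Defs.v *)
From HB Require Import structures.
From mathcomp Require Import all_boot all_order all_algebra.
From mathcomp Require Import all_classical all_reals all_analysis.
Set Implicit Arguments. Unset Strict Implicit. Unset Printing Implicit Defensive.
Import Order.TTheory GRing.Theory Num.Theory.
Import numFieldTopology.Exports numFieldNormedType.Exports.
Local Open Scope classical_set_scope.
Local Open Scope ring_scope.

Section Ck.
Context {R : realType} {X : topologicalType}.

Definition tychonoff_space : Prop :=
  hausdorff_space X /\
  forall (a : X) (B : set X), closed B -> ~ B a ->
    exists f : X -> R, continuous f /\ f a = 0 /\ (forall x, B x -> f x = 1)
      /\ (forall x, 0 <= f x <= 1).

Definition Ck : set {compact-open, X -> R} := [set f | continuous (f : X -> R)].

Definition zero_fun : {compact-open, X -> R} := fun _ => 0.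

Definition Ck_nbhs0 (U : set {compact-open, X -> R}) : Prop :=
  exists W, nbhs zero_fun W /\ W `&` Ck `<=` U.

Definition Ck_bounded (B : set {compact-open, X -> R}) : Prop :=
  B `<=` Ck /\
  forall U, Ck_nbhs0 U -> exists t : R, 0 < t /\
    forall f, B f -> U ((fun x => t * f x) : {compact-open, X -> R}).

Definition Ck_closed (B : set {compact-open, X -> R}) : Prop :=
  B `<=` Ck /\ closure B `&` Ck `<=` B.

Definition abs_convex (B : set {compact-open, X -> R}) : Prop :=
  forall f g a b, B f -> B g -> `|a| + `|b| <= 1 ->
    B ((fun x => a * f x + b * g x) : {compact-open, X -> R}).

Definition disc_span (B : set {compact-open, X -> R}) : set (X -> R) :=
  [set f | exists t : R, exists2 g, B g & f = (fun x => t * g x)].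

Definition minkowski (B : set {compact-open, X -> R}) (f : X -> R) : R :=
  inf [set t : R | 0 < t /\ exists2 g, B g & f = (fun x => t * g x)].

Definition banach_disc (B : set {compact-open, X -> R}) : Prop :=
  (forall f, disc_span B f -> minkowski B f = 0 -> f = (fun _ => 0)) /\
  forall u : nat -> (X -> R), (forall n, disc_span B (u n)) ->
    (forall e : R, 0 < e -> exists N, forall m n, (N <= m)%N -> (N <= n)%N ->
        minkowski B (fun x => u m x - u n x) < e) ->
    exists2 f, disc_span B f &
      forall e : R, 0 < e -> exists N, forall n, (N <= n)%N ->
        minkowski B (fun x => u n x - f x) < e.

Definition locally_complete_Ck : Prop :=
  forall B, Ck_closed B -> Ck_bounded B -> abs_convex B -> banach_disc B.

Definition functionally_bounded (A : set X) : Prop :=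
  forall f : X -> R, continuous f -> exists M : R, forall x, A x -> `|f x| <= M.

(** The (topological) dual of C_k(X): continuous linear functionals. Functionals
    are represented by maps on all functions; only their values on Ck matter. *)
Definition Ck_dual : set ({compact-open, X -> R} -> R) :=
  [set phi | (forall f g (a b : R), Ck f -> Ck g ->
       phi ((fun x => a * f x + b * g x) : {compact-open, X -> R})
         = a * phi f + b * phi g)
     /\ {within Ck, continuous phi}].

Definition strong_dual_nbhs0 (U : set ({compact-open, X -> R} -> R)) : Prop :=
  U `<=` Ck_dual /\
  exists B, Ck_bounded B /\ exists2 e : R, 0 < e &
    [set phi | Ck_dual phi /\ forall f, B f -> `|phi f| < e] `<=` U.

Definition strong_dual_has_Gbase : Prop :=
  exists U : (nat -> nat) -> set ({compact-open, X -> R} -> R),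
    (forall a, strong_dual_nbhs0 (U a)) /\
    (forall V, strong_dual_nbhs0 V -> exists a, U a `<=` V) /\
    (forall a b : nat -> nat, (forall i, (b i <= a i)%N) -> U a `<=` U b).

End Ck.

(* Main.v *)
Require Import Defs.
From HB Require Import structures.
From mathcomp Require Import all_boot all_order all_algebra.
From mathcomp Require Import all_classical all_reals all_analysis.
Import Order.TTheory GRing.Theory Num.Theory.
Import numFieldTopology.Exports numFieldNormedType.Exports.
Local Open Scope classical_set_scope.
Local Open Scope ring_scope.
From mathcomp Require Import ring lra.
Section Topo.
Context {R : realType} {X : topologicalType}.
Local Notation CO := {compact-open, X -> R}.

Lemma co_nbhs_sub (f : CO) (K : set X) (O : set R) :
  compact K -> open O -> f @` K `<=` O -> nbhs f [set g : CO | g @` K `<=` O].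
Proof.
move=> cK oO fKO; apply: open_nbhs_nbhs; split => //.
exact: compact_open_open.
Qed.

Lemma co_nbhs_pt (f : CO) (x : X) (d : R) : 0 < d ->
  nbhs f [set g : CO | `|g x - f x| < d].
Proof.
move=> d0.
have := @co_nbhs_sub f [set x] (ball (f x) d) (@compact_set1 _ x) (ball_open _ _).
case/(_ _)/Wrap => [_ [y -> <-]|]; first exact: ballxx.
apply: filterS => g /(_ (g x)) H; have := H (ex_intro2 _ _ x erefl erefl).
by rewrite -ball_normE /= distrC.
Qed.

Lemma co_nbhs0 (K : set X) (e : R) : compact K -> 0 < e ->
  nbhs (zero_fun : CO) [set g : CO | forall x, K x -> `|g x| < e].
Proof.
move=> cK e0.
have := @co_nbhs_sub zero_fun K (ball 0 e) cK (ball_open _ _).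
case/(_ _)/Wrap => [_ [y _ <-]|]; first exact: ballxx.
apply: filterS => g H x Kx; have := H (g x) (ex_intro2 _ _ x Kx erefl).
by rewrite -ball_normE /= sub0r normrN.
Qed.

Definition Gfil : set_system CO := fun P => exists K e, compact K /\ 0 < e /\
  [set g : CO | forall x, K x -> `|g x| < e] `<=` P.

Lemma Gfil_filter : Filter Gfil.
Proof.
split.
- by exists set0, 1; split; [exact: compact0|split].
- move=> P Q [K1 [e1 [c1 [e10 s1]]]] [K2 [e2 [c2 [e20 s2]]]].
  exists (K1 `|` K2), (Order.min e1 e2); split; first exact: compactU.
  split; first by rewrite lt_min e10.
  move=> g H; split.
    by apply: s1 => x Kx; apply: (lt_le_trans (H x (or_introl Kx))); rewrite ge_min lexx.
  by apply: s2 => x Kx; apply: (lt_le_trans (H x (or_intror Kx))); rewrite ge_min lexx orbT.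
- by move=> P Q PQ [K [e [c [e0 s]]]]; exists K, e; split => //; split => //; apply: subset_trans PQ.
Qed.

Lemma co_nbhs0_inv (W : set CO) : nbhs (zero_fun : CO) W ->
  exists K e, compact K /\ 0 < e /\
  [set g : CO | forall x, K x -> `|g x| < e] `<=` W.
Proof.
suff : Gfil --> (zero_fun : CO) by move/(_ W).
apply/(compact_open_cvgP _ Gfil_filter) => K V cK oV zKV.
have [V0|nV0] := pselect (V 0).
  move: oV; rewrite openE => /(_ _ V0); rewrite /interior.
  case/nbhs_ballP => e /= e0 be.
  exists K, e; split => //; split => // g H y [x Kx <-].
  by apply: be; rewrite -ball_normE /= sub0r normrN; exact: H.
exists K, 1; split => //; split => // g _ y [x Kx _].
by exfalso; apply: nV0; exact: (zKV 0 (ex_intro2 _ _ x Kx erefl)).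
Qed.

End Topo.
Section Geo.
Context {R : realType}.

Lemma geo (v lamg : nat -> R) (b : R) (N : nat) :
  (forall k, v k.+1 = v k + lamg k) ->
  (forall j, (N <= j)%N -> `|lamg j| <= b * (2^-1)^+j) ->
  forall d, `|v (N + d)%N - v N| <= 2 * b * ((2^-1)^+N - (2^-1)^+(N + d)).
Proof.
move=> hv hl; elim => [|d IH]; first by rewrite addn0 subrr normr0 subrr mulr0.
rewrite addnS hv.
have h1 := hl (N + d)%N (leq_addr _ _).
have h2 := ler_normD (v (N + d)%N - v N) (lamg (N + d)%N).
rewrite exprSr.
set q := (2^-1)^+(N + d) in h1 IH *.
have -> : v (N + d)%N + lamg (N + d)%N - v N = v (N + d)%N - v N + lamg (N + d)%N by ring.
lra.
Qed.

Lemma geo2 (v lamg : nat -> R) (b : R) (N : nat) : 0 <= b ->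
  (forall k, v k.+1 = v k + lamg k) ->
  (forall j, (N <= j)%N -> `|lamg j| <= b * (2^-1)^+j) ->
  forall m, (N <= m)%N -> `|v m - v N| <= 2 * b * (2^-1)^+N.
Proof.
move=> b0 hv hl m Nm; have := geo v lamg b N hv hl (m - N); rewrite subnKC // => h.
apply: (le_trans h); rewrite ler_wpM2l ?mulr_ge0 //.
by rewrite gerBl exprn_ge0 // invr_ge0.
Qed.

Lemma pow_small (e : R) : 0 < e -> exists N : nat, 4 * (2^-1)^+N < e.
Proof.
move=> e0; exists (Num.trunc (4 / e)).+1.
set N := (Num.trunc (4 / e)).+1.
have h1 : 4 / e < N%:R by exact: truncnS_gt.
have h2 : N%:R < (2 ^ N)%:R :> R by rewrite ltr_nat ltn_expl.
rewrite natrX in h2.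
have p0 : 0 < (2:R) ^+ N by rewrite exprn_gt0.
rewrite exprVn ltr_pdivrMr //.
move: h1; rewrite ltr_pdivrMr // => h1; nra.
Qed.

End Geo.
Section Main.
Context {R : realType} {X : topologicalType}.
Local Notation CO := {compact-open, X -> R}.

Lemma cont_scale (a : R) (f : X -> R) : continuous f -> continuous (fun x => a * f x).
Proof.
move=> cf x; apply: (@continuousM _ _ (fun=> a) f x); last exact: cf.
exact: (@cst_continuous X R a x).
Qed.

Lemma cont_comb (a b : R) (f g : X -> R) : continuous f -> continuous g ->
  continuous (fun x => a * f x + b * g x).
Proof.
move=> cf cg x.
apply: (@continuousD _ R^o _ (fun x => a * f x) (fun x => b * g x) x);
  exact: cont_scale.
Qed.

Lemma contB (f g : X -> R) : continuous f -> continuous g ->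
  continuous (fun x => f x - g x).
Proof.
move=> cf cg; have := cont_comb 1 (-1) f g cf cg.
by under eq_fun do rewrite mul1r mulN1r.
Qed.

Lemma contD (f g : X -> R) : continuous f -> continuous g ->
  continuous (fun x => f x + g x).
Proof.
move=> cf cg; have := cont_comb 1 1 f g cf cg.
by under eq_fun do rewrite !mul1r.
Qed.

End Main.
Section Key.
Context {R : realType} {X : topologicalType}.
Local Notation CO := {compact-open, X -> R}.

Lemma key (A : set X) (B : set CO) : @locally_complete_Ck R X ->
  @functionally_bounded R X A -> Ck_bounded B ->
  exists M : R, forall f x, B f -> A x -> `|f x| <= M.
Proof.
move=> lc fbA bB.
apply: contrapT => nM.
have big : forall M : R, exists f x, B f /\ A x /\ M < `|f x|.
  move=> M; apply: contrapT => h; apply: nM; exists M => f x Bf Ax.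
  rewrite leNgt; apply/negP => lt; apply: h; by exists f, x.
have [f0 [x0 _]] := big 0.
have /choice [cK HcK] : forall K : set X, exists r : R, compact K ->
    0 <= r /\ (forall f x, B f -> K x -> `|f x| <= r).
  move=> K; have [cKK|nc] := pselect (compact K); last by exists 0 => /nc.
  have [_ /(_ [set g : CO | forall x, K x -> `|g x| < 1])] := bB.
  case.
    exists [set g : CO | forall x, K x -> `|g x| < 1]; split; first exact: co_nbhs0.
    by move=> g [].
  move=> t [t0 Ht]; exists t^-1 => _; split; first by rewrite invr_ge0 ltW.
  move=> f x Bf Kx; have := Ht f Bf x Kx; rewrite /= normrM gtr0_norm // => h.
  rewrite -div1r ler_pdivlMr // mulrC; exact: ltW.
have cK0 K : compact K -> 0 <= cK K by move=> h; exact: (HcK K h).1.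
pose D : set CO := [set f | Ck f /\ forall K x, compact K -> K x -> `|f x| <= cK K].
have inD (v : X -> R) (T : R) : continuous v -> 0 < T ->
    (forall K x, compact K -> K x -> `|v x| <= T * cK K) ->
    D ((fun x => T^-1 * v x) : CO) /\ v = (fun x => T * (T^-1 * v x)).
  move=> cv T0 hv; split; last first.
    by apply: funext => x; rewrite mulrA mulfV ?mul1r // gt_eqF.
  split; first exact: cont_scale.
  move=> K x cKK Kx; rewrite normrM gtr0_norm ?invr_gt0 // mulrC ler_pdivrMr //.
  by rewrite mulrC; exact: hv.
have closedD : Ck_closed D.
  split; first by move=> f [].
  move=> f [clf cf]; split => // K x cKK Kx; rewrite leNgt; apply/negP => lt.
  have d0 : 0 < `|f x| - cK K by rewrite subr_gt0.
  have [g [Dg /= hg]] := clf _ (co_nbhs_pt f x _ d0).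
  have := Dg.2 K x cKK Kx; have := lerB_dist (f x) (g x).
  rewrite distrC in hg; lra.
have bdD : Ck_bounded D.
  split; first by move=> f [].
  move=> U0 [W [nW WU]]; case: (co_nbhs0_inv _ nW) => K [e [cKK [e0 sW]]].
  have c0 := cK0 K cKK.
  exists (e / (cK K + 1)); split; first by rewrite divr_gt0 // ltr_wpDl.
  move=> f [cf bf]; apply: WU; split; last exact: cont_scale.
  apply: sW => x Kx /=; rewrite normrM gtr0_norm ?divr_gt0 ?ltr_wpDl //.
  rewrite mulrAC ltr_pdivrMr ?ltr_wpDl //.
  have := bf K x cKK Kx; nra.
have acD : abs_convex D.
  move=> f g a b [cf bf] [cg bg] hab; split; first exact: cont_comb.
  move=> K x cKK Kx /=; have c0 := cK0 K cKK.
  have := ler_normD (a * f x) (b * g x); rewrite !normrM.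
  have := bf K x cKK Kx; have := bg K x cKK Kx.
  have := normr_ge0 a; have := normr_ge0 b; nra.
have [_ compl] := lc D closedD bdD acD.
have mink_le (v : X -> R) (t : R) (g : CO) : 0 < t -> D g ->
    v = (fun x => t * g x) -> Defs.minkowski D v <= t.
  move=> t0 Dg ev; apply: ge_inf; last by split => //; exists g.
  by exists 0 => y [y0 _]; exact: ltW.
have mink_lt (v : X -> R) (T e : R) : continuous v -> 0 < T ->
    (forall K x, compact K -> K x -> `|v x| <= T * cK K) -> Defs.minkowski D v < e ->
    exists t, 0 < t /\ t < e /\ (forall K x, compact K -> K x -> `|v x| <= t * cK K).
  move=> cv T0 hv; case/inf_lt.
    have [DT eT] := inD v T cv T0 hv.
    by exists T; split => //; exists (fun x => T^-1 * v x).
  move=> t [t0 [g Dg ev]] te; exists t; split => //; split => // K x cKK Kx.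
  by rewrite ev normrM gtr0_norm // ler_pM2l //; exact: Dg.2.
have /choice [pk Hpk] : forall q : (X -> R) * R * nat, exists p : CO * X,
    continuous q.1.1 -> 0 < q.1.2 ->
    [/\ B p.1, A p.2 & `|q.1.1 p.2| + q.2%:R + 3 <= q.1.2 * `|p.1 p.2|].
  case=> [[u l] k] /=; have [[cu l0]|nc] := pselect (continuous u /\ 0 < l); last first.
    by exists (f0, x0) => cu l0; exfalso; apply: nc.
  have [Mu HMu] := fbA u cu.
  have [f [x [Bf [Ax lt]]]] := big ((`|Mu| + k%:R + 3) / l).
  exists (f, x) => _ _ /=; split => //.
  move: lt; rewrite ltr_pdivrMr // => lt.
  have := HMu x Ax; have := ler_norm Mu; lra.
pose r : R := 2^-1.
pose lam (k : nat) (S : R) : R := r ^+ k / (1 + S).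
pose st := fix st (n : nat) : (X -> R) * R :=
  if n is k.+1 then
    let p := pk ((st k).1, lam k (st k).2, k) in
    ((fun y => (st k).1 y + lam k (st k).2 * p.1 y), (st k).2 + cK [set p.2])
  else ((fun=> 0), 0).
pose u n := (st n).1.
pose S n := (st n).2.
pose g n := (pk (u n, lam n (S n), n)).1.
pose xs n := (pk (u n, lam n (S n), n)).2.
have uS n : u n.+1 = (fun y => u n y + lam n (S n) * g n y) by [].
have SS n : S n.+1 = S n + cK [set xs n] by [].
have r0 : 0 < r by rewrite invr_gt0.
have lam0 n : 0 <= S n -> 0 < lam n (S n).
  move=> h; rewrite /lam; apply: divr_gt0; [exact: (exprn_gt0 _ r0) | lra].
have inv n : continuous (u n) /\ 0 <= S n.
  elim: n => [|n [cu S0]]; first by split => //; exact: (@cst_continuous X R 0).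
  have [Bg Ax _] := Hpk (u n, lam n (S n), n) cu (lam0 n S0).
  split; last by rewrite SS addr_ge0 // cK0 //; exact: compact_set1.
  rewrite uS; apply: contD => //; apply: cont_scale; exact: bB.1.
have Hp n : [/\ B (g n), A (xs n) &
    `|u n (xs n)| + n%:R + 3 <= lam n (S n) * `|g n (xs n)|].
  exact: (Hpk (u n, lam n (S n), n) (inv n).1 (lam0 n (inv n).2)).
have lamle n : lam n (S n) <= r ^+ n.
  have h1 := (inv n).2; have h2 := exprn_ge0 n (ltW r0).
  rewrite /lam ler_pdivrMr; [nra | lra].
have Smono i j : (i < j)%N -> cK [set xs i] <= S j.
  elim: j => // j IH; rewrite ltnS leq_eqVlt => /orP [/eqP eij|/IH h].
    by rewrite SS eij; have := (inv j).2; lra.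
  have := cK0 _ (@compact_set1 _ (xs j)).
  by rewrite SS; lra.
have cauchy K x N m : compact K -> K x -> (N <= m)%N ->
    `|u m x - u N x| <= 2 * cK K * r ^+ N.
  move=> cKK Kx Nm.
  apply: (geo2 (fun k => u k x) (fun k => lam k (S k) * g k x)) => //.
  - exact: cK0.
  - move=> j _; rewrite normrM gtr0_norm ?lam0 ?(inv j).2 // mulrC.
    apply: ler_pM => //; first by rewrite ltW ?lam0 ?(inv j).2.
    by have [Bg _ _] := Hp j; exact: (HcK K cKK).2.
have ubd K x n : compact K -> K x -> `|u n x| <= 2 * cK K.
  move=> cKK Kx; have := cauchy K x 0%N n cKK Kx (leq0n _).
  by rewrite expr0 mulr1 /= subr0.
have cauchy2 K x N m n : compact K -> K x -> (N <= m)%N -> (N <= n)%N ->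
    `|u m x - u n x| <= 4 * cK K * r ^+ N.
  move=> cKK Kx Nm Nn; have := cauchy K x N m cKK Kx Nm.
  have := cauchy K x N n cKK Kx Nn; have := ler_distD (u N x) (u m x) (u n x).
  rewrite (distrC (u N x)); lra.
have span n : disc_span D (u n).
  have T0 : (0 : R) < 2 by [].
  have [DT eT] := inD (u n) 2 (inv n).1 T0 (fun K x cKK Kx => ubd K x n cKK Kx).
  by exists 2; exists (fun x => 2^-1 * u n x).
have cauchyM : forall e : R, 0 < e -> exists N, forall m n, (N <= m)%N -> (N <= n)%N ->
    Defs.minkowski D (fun x => u m x - u n x) < e.
  move=> e e0; have [N hN] := pow_small _ e0; exists N => m n Nm Nn.
  have T0 : 0 < 4 * r ^+ N by rewrite mulr_gt0 // exprn_gt0.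
  have hb : forall K x, compact K -> K x -> `|u m x - u n x| <= 4 * r ^+ N * cK K.
    move=> K x cKK Kx; rewrite mulrAC; exact: cauchy2.
  have [DT eT] := inD (fun x => u m x - u n x) (4 * r ^+ N)
    (contB _ _ (inv m).1 (inv n).1) T0 hb.
  apply: le_lt_trans (mink_le _ _ _ T0 DT eT) hN.
have [h [s [g0 Dg0 eh]] conv] := compl u span cauchyM.
have ch : continuous h by rewrite eh; apply: cont_scale; exact: Dg0.1.
have hbd K x : compact K -> K x -> `|h x| <= `|s| * cK K.
  move=> cKK Kx; rewrite eh normrM ler_wpM2l //; exact: Dg0.2.
have lower k : k%:R + 1 <= `|h (xs k)|.
  set xk := xs k; set c := cK [set xk].
  have cxk : compact [set xk] := @compact_set1 _ xk.
  have c0 : 0 <= c := cK0 _ cxk.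
  have e0 : 0 < (1 + c)^-1 by rewrite invr_gt0; lra.
  have [N hN] := conv _ e0.
  set n := maxn N k.+1.
  have [t [t0 [te ht]]] : exists t, 0 < t /\ t < (1 + c)^-1 /\
      (forall K x, compact K -> K x -> `|u n x - h x| <= t * cK K).
    apply: (mink_lt _ (3 + `|s|)).
    - exact: (contB _ _ (inv n).1 ch).
    - have := normr_ge0 s; lra.
    - move=> K x cKK Kx; have := ubd K x n cKK Kx; have := hbd K x cKK Kx.
      have := cK0 _ cKK; have := ler_normB (u n x) (h x); have := normr_ge0 s; nra.
    - by apply: hN; rewrite leq_maxl.
  have F3 : `|u n xk - h xk| < 1.
    have := ht _ xk cxk erefl.
    have : t * (1 + c) < 1.
      by move: te; rewrite -[X in _ < X]div1r ltr_pdivlMr; [| lra].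
    rewrite -/c; nra.
  have F2 : `|u n xk - u k.+1 xk| <= 1.
    have hl : forall j, (k.+1 <= j)%N -> `|lam j (S j) * g j xk| <= 1 * r ^+ j.
      move=> j kj; rewrite mul1r normrM gtr0_norm ?lam0 ?(inv j).2 //.
      have [Bg _ _] := Hp j.
      have h1 := (HcK _ cxk).2 _ xk Bg erefl.
      have h2 := Smono k j kj.
      have h4 := (inv j).2.
      have h5 : lam j (S j) * S j <= r ^+ j.
        rewrite /lam mulrAC ler_pdivrMr; last by lra.
        have := exprn_ge0 j (ltW r0); nra.
      have h6 : 0 < lam j (S j) := lam0 j h4.
      rewrite -/c in h1 h2; nra.
    have := geo2 (fun j => u j xk) (fun j => lam j (S j) * g j xk) 1 k.+1
      ler01 (fun j => erefl) hl n (leq_maxr _ _).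
    move=> H; apply: (le_trans H).
    have : r ^+ k <= 1 by apply: exprn_ile1; [exact: ltW | rewrite /r invf_le1; lra].
    by rewrite exprS /r mulr1 mulrA mulfV ?mul1r.
  have E1 : u k.+1 xk = u k xk + lam k (S k) * g k xk by [].
  have [_ _ F1] := Hp k; rewrite -/xk in F1.
  have F4 : lam k (S k) * `|g k xk| <= `|u k.+1 xk| + `|u k xk|.
    have := ler_normB (u k.+1 xk) (u k xk).
    by rewrite E1 addrAC subrr add0r normrM gtr0_norm ?lam0 ?(inv k).2.
  have := lerB_dist (u k.+1 xk) (h xk).
  have := ler_distD (u n xk) (u k.+1 xk) (h xk).
  rewrite distrC in F2; lra.
have [Mh HMh] := fbA h ch.
have [_ Ax _] := Hp (Num.trunc Mh).
have := lower (Num.trunc Mh); have := HMh _ Ax.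
have := truncnS_gt Mh; rewrite -natr1; lra.
Qed.

End Key.

Theorem corollary2p8 (R : realType) (X : topologicalType) :
  @tychonoff_space R X ->
  @locally_complete_Ck R X ->
  (exists A : nat -> set X,
      (forall n, @functionally_bounded R X (A n)) /\
      (forall n, A n `<=` A n.+1) /\
      (forall K : set X, compact K -> exists n, K `<=` A n)) ->
  @strong_dual_has_Gbase R X.
Proof.
move=> _ lc [A [fbA [incA swA]]].
pose Ba (a : nat -> nat) : set {compact-open, X -> R} :=
  [set f | Ck f /\ forall n x, A n x -> `|f x| <= (a n)%:R].
pose U (a : nat -> nat) : set ({compact-open, X -> R} -> R) :=
  [set phi | Ck_dual phi /\ forall f, Ba a f -> `|phi f| < ((a 0%N)%:R + 1)^-1].
have Ba_bd a : Ck_bounded (Ba a).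
  split; first by move=> f [].
  move=> U0 [W [nW WU]]; case: (co_nbhs0_inv _ nW) => K [e [cK [e0 sW]]].
  case: (swA K cK) => m KA.
  have am0 : 0 < (a m)%:R + 1 :> R by rewrite ltr_wpDl.
  exists (e / ((a m)%:R + 1)); split; first by rewrite divr_gt0.
  move=> f [cf bf]; apply: WU; split; last exact: cont_scale.
  apply: sW.
  move=> x Kx /=; rewrite normrM gtr0_norm ?divr_gt0 //.
  rewrite -mulrA gtr_pMr // ltr_pdivrMl // mulr1.
  by apply: (le_lt_trans (bf m x (KA x Kx))); rewrite ltrDl.
exists U; split; [|split].
- move=> a; split; first by move=> phi [].
  exists (Ba a); split => //; exists ((a 0%N)%:R + 1)^-1 => //.
- move=> V [_ [B [bB [e e0 sV]]]].
  have /choice [M HM] : forall n, exists M : R, forall f x, B f -> A n x -> `|f x| <= M.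
    by move=> n; apply: key.
  pose a n := (Num.trunc (M n) + Num.trunc e^-1).+1.
  exists a => phi [dphi H]; apply: sV; split => // f Bf.
  have : Ba a f.
    split; first exact: bB.1.
    move=> n x Anx; apply: (le_trans (HM n f x Bf Anx)).
    apply/ltW/(lt_le_trans (truncnS_gt _)); rewrite ler_nat ltnS leq_addr //.
  move/H/lt_le_trans; apply.
  rewrite -[e]invrK lef_pV2 ?posrE ?invr_gt0 ?ltr_wpDl //.
  apply/ltW/(lt_le_trans (truncnS_gt _)); rewrite -natr1 lerD2r ler_nat.
  by rewrite /a; apply/ltnW; rewrite ltnS leq_addl.
- move=> a b ba phi [dphi H]; split => // f [cf bf].
  apply: (lt_le_trans (H f _)).
    split => // n x Anx; apply: (le_trans (bf n x Anx)); rewrite ler_nat; exact: ba.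
  by rewrite lef_pV2 ?posrE ?ltr_wpDl // lerD2r ler_nat.
Qed.
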